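(* Let $f(t)=1+\sum_{i=1}^{d}f_{i-1}t^{i}$ be a polynomial with positive integer coefficients $f_0,\dots,f_{d-1}$, all of whose roots are real. Then $(1,f_0,\dots,f_{d-1})$ is the $h$-vector of a Cohen–Macaulay simplicial complex; equivalently, $\kappa_{i+1}(f_i)\le f_{i-1}$ for all $0\le i\le d-1$ (with $f_{-1}=1$).
   Context: Given positive integers $m$ and $i$, $m$ has a unique $i$-th binomial expansion $m=\binom{a_i}{i}+\binom{a_{i-1}}{i-1}+\cdots+\binom{a_j}{j}$ with $a_i>a_{i-1}>\cdots>a_j\ge j\ge1$. Define $\kappa_i(m)=\binom{a_i-1}{i-1}+\binom{a_{i-1}-1}{i-2}+\cdots+\binom{a_j-1}{j-1}$. For a simplicial complex $\Delta$ of dimension $d-1$ with $f$-vector $(f_{-1},\dots,f_{d-1})$ ($f_i$ = number of $i$-dimensional faces, $f_{-1}=1$), the $h$-polynomial $\sum_{i=0}^{d} h_i t^i$ is defined by $\sum h_it^i=(1-t)^{d}\sum_{i=0}^{d}f_{i-1}(t/(1-t))^{i}$, and $(h_0,\dots,h_d)$ is its $h$-vector. By Macaulay's theorem, a vector $(1,f_0,\dots,f_{d-1})$ of positive integers is the $h$-vector of a Cohen–Macaulay simplicial complex iff $\kappa_{i+1}(f_i)\le f_{i-1}$ for $0\le i\le d-1$. *)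

(* Defs.v *)
From HB Require Import structures.
From mathcomp Require Import all_boot all_order all_algebra all_field all_character.
Set Implicit Arguments. Unset Strict Implicit. Unset Printing Implicit Defensive.
Import Order.TTheory GRing.Theory Num.Theory.

(* Leading term of the i-th binomial (Macaulay) expansion of m:
   the largest a with 'C(a, i) <= m.  Since 'C(a, i) >= a - i + 1 for
   a >= i >= 1, the largest such a is < m + i + 1. *)
Definition macaulay_top (i m : nat) : nat :=
  \max_(a <- iota 0 (m + i).+1 | 'C(a, i) <= m) a.

(* kappa_i(m) = sum_k 'C(a_k - 1, k - 1) over the (greedy, hence unique)
   i-th binomial expansion m = 'C(a_i, i) + 'C(a_{i-1}, i-1) + ... + 'C(a_j, j),
   a_i > ... > a_j >= j >= 1. *)
Fixpoint kappa (i m : nat) {struct i} : nat :=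
  match i with
  | 0 => 0
  | i'.+1 =>
      if m == 0 then 0
      else let a := macaulay_top i m in
           'C(a.-1, i') + kappa i' (m - 'C(a, i))
  end.

(* f(t) = 1 + sum_{i=1}^{d} f_{i-1} t^i, with fs = [:: f_0; ...; f_{d-1}],
   viewed as a polynomial over the algebraic complex numbers. *)
Definition fpoly (fs : seq nat) : {poly algC} :=
  \poly_(i < (size fs).+1) ((nth 1%N (1%N :: fs) i)%:R : algC)%R.

(* Main.v *)
Require Import Defs.
From HB Require Import structures.
From mathcomp Require Import all_boot all_order all_algebra all_field all_character.
From mathcomp Require Import zify ring lra.
Import Order.TTheory GRing.Theory Num.Theory.
Set Implicit Arguments. Unset Strict Implicit. Unset Printing Implicit Defensive.

Lemma bin_lin n i : 0 < i -> n.+1 <= 'C(n + i, i).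
Proof.
move=> i0; elim: n => [|n IH]; first by rewrite add0n binn.
case: i i0 IH => // i _ IH.
rewrite addSn binS.
have : 0 < 'C(n + i.+1, i) by rewrite bin_gt0; lia.
lia.
Qed.

Lemma disc_ivt (P : nat -> bool) n : P 0 -> ~~ P n -> exists b, b < n /\ P b /\ ~~ P b.+1.
Proof.
move=> P0; elim: n => [|n IH]; first by rewrite P0.
move=> Pn; case: (boolP (P n)) => Hn.
  by exists n; split.
by have [b [? ?]] := IH Hn; exists b; split => //; lia.
Qed.

Lemma top_spec i m b : 0 < i -> 0 < m -> 'C(b, i) <= m < 'C(b.+1, i) -> macaulay_top i m = b.
Proof.
move=> i0 m0 /andP [Hb1 Hb2].
have bi : i <= b.
  case: (leqP i b) => // h.
  have e : b.+1 = i.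
    have : 0 < 'C(b.+1, i) by lia.
    rewrite bin_gt0; lia.
  move: Hb2; rewrite e binn; lia.
apply/eqP; rewrite eqn_leq; apply/andP; split.
  apply/bigmax_leqP_seq => a _ Ha.
  case: (leqP a b) => // h.
  move: Ha => /= Ha; have := leq_bin2l i h; lia.
rewrite /macaulay_top; apply: (leq_bigmax_seq (F := fun a => a)) => //.
rewrite mem_iota add0n ltnS.
have := bin_lin (b - i) i0; rewrite subnK //; lia.
Qed.

Lemma topP i m : 0 < i -> 0 < m ->
  let c := macaulay_top i m in [/\ i <= c, 'C(c, i) <= m & m < 'C(c.+1, i)].
Proof.
move=> i0 m0.
have P0 : 'C(i + 0, i) <= m by rewrite addn0 binn.
have Pm : ~~ ('C(i + m, i) <= m) by rewrite -ltnNge addnC; have := bin_lin m i0; lia.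
have [b [_ [H1 H2]]] := @disc_ivt (fun a => 'C(i + a, i) <= m) m P0 Pm.
move: H1 H2 => /= H1 H2; rewrite -ltnNge addnS in H2.
rewrite /= (@top_spec i m (i + b)) //; first by split => //; lia.
by apply/andP.
Qed.

Fixpoint pp (i m : nat) {struct i} : nat :=
  match i with
  | 0 => 0
  | i'.+1 => if m == 0 then 0
             else 'C((macaulay_top i m).+1, i.+1) + pp i' (m - 'C(macaulay_top i m, i))
  end.

Lemma kappaS i m : 0 < m -> kappa i.+1 m =
  'C((macaulay_top i.+1 m).-1, i) + kappa i (m - 'C(macaulay_top i.+1 m, i.+1)).
Proof. by case: m. Qed.

Lemma ppS i m : 0 < m -> pp i.+1 m =
  'C((macaulay_top i.+1 m).+1, i.+2) + pp i (m - 'C(macaulay_top i.+1 m, i.+1)).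
Proof. by case: m. Qed.

Lemma kappa0 i : kappa i 0 = 0. Proof. by case: i. Qed.
Lemma pp0 i : pp i 0 = 0. Proof. by case: i. Qed.

Lemma top_lt i m B : 0 < i -> 0 < m -> m < 'C(B, i) -> macaulay_top i m < B.
Proof.
move=> i0 m0 mB; have [_ H1 _] := topP i0 m0.
case: (leqP B (macaulay_top i m)) => // h.
have := leq_bin2l i h; lia.
Qed.

Lemma rem_lt i m : 0 < m -> m - 'C(macaulay_top i.+1 m, i.+1) < 'C(macaulay_top i.+1 m, i).
Proof.
move=> m0; have [_ H1 H2] := topP (ltn0Sn i) m0.
move: H2; rewrite binS; lia.
Qed.

Lemma K1 i m B : m < 'C(B, i) -> kappa i m <= 'C(B.-1, i.-1).
Proof.
elim: i m B => [|i IH] m B mB; first by [].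
case: (posnP m) => [->|m0]; first by rewrite kappa0.
rewrite kappaS //.
set c := macaulay_top i.+1 m.
have [ic _ _] := topP (ltn0Sn i) m0.
have cB : c < B by apply: top_lt.
have IH' := IH _ _ (rem_lt i m0).
rewrite -/c in IH'.
apply: (@leq_trans 'C(c, i)); last by apply: leq_bin2l; lia.
rewrite -/c in ic; clearbody c; clear IH mB cB; case: i IH' ic => [|j] IH' ic.
  by rewrite /= !bin0.
have h : 'C(c.-1, j.+1) + 'C(c.-1, j) = 'C(c, j.+1).
  by rewrite -binS prednK //; lia.
move: IH' => /= IH'; lia.
Qed.

Lemma B5 i m B : m < 'C(B, i) -> pp i m < 'C(B.+1, i.+1).
Proof.
elim: i m B => [|i IH] m B mB.
  by rewrite /= bin1.
case: (posnP m) => [->|m0].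
  rewrite pp0 bin_gt0; have : 0 < 'C(B, i.+1) by lia.
  rewrite bin_gt0; lia.
rewrite ppS //.
set c := macaulay_top i.+1 m.
have cB : c < B by apply: top_lt.
have IH' := IH _ _ (rem_lt i m0).
rewrite -/c in IH'.
apply: (@leq_trans 'C(c.+2, i.+2)); last by apply: leq_bin2l; lia.
rewrite [X in _ < X]binS; lia.
Qed.

Lemma Mlem i a m : m <= pp i a -> kappa i.+1 m <= a.
Proof.
elim: i a m => [|i IH] a m.
  by rewrite /= leqn0 => /eqP ->.
case: (posnP m) => [->|m0]; first by rewrite kappa0.
case: (posnP a) => [->|a0]; first by rewrite pp0; lia.
rewrite ppS // kappaS //.
set c := macaulay_top i.+1 a.
set b := macaulay_top i.+2 m.
have [ic Hc1 Hc2] := topP (ltn0Sn i) a0.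
have [ib Hb1 Hb2] := topP (ltn0Sn i.+1) m0.
rewrite -/c in ic Hc1 Hc2; rewrite -/b in ib Hb1 Hb2.
have ra := rem_lt i a0; rewrite -/c in ra.
have rm := rem_lt i.+1 m0; rewrite -/b in rm.
move=> Hm.
case: (ltngtP b c.+1) => hb.
-
  have := K1 rm; rewrite /= => hk.
  apply: (@leq_trans 'C(b, i.+1)); last first.
    apply: (leq_trans _ Hc1); apply: leq_bin2l; lia.
  have h : 'C(b.-1, i.+1) + 'C(b.-1, i) = 'C(b, i.+1).
    by rewrite -binS prednK //; lia.
  lia.
-
  have := B5 ra; rewrite -/c => hp.
  have h1 := leq_bin2l i.+2 hb.
  have h2 : 'C(c.+2, i.+2) = 'C(c.+1, i.+2) + 'C(c.+1, i.+1) by rewrite binS.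
  lia.
-
  have e : (c.+1).-1 = c by [].
  rewrite hb e.
  have := IH (a - 'C(c, i.+1)) (m - 'C(c.+1, i.+2)).
  lia.
Qed.

Section RealPart.
Local Open Scope ring_scope.
Lemma step_real (R : realFieldType) (i c C K P a k p : R) :
  2 <= i -> i <= c -> 0 <= C -> 0 <= a -> 0 <= k -> 0 <= p ->
  c * K = i * C -> (i + 1) * P = (c + 1) * C ->
  a * (2 * c + 1) <= C * (2 * i ^+ 2 - 1) ->
  (i - 1) * a ^+ 2 <= i * k * p ->
  i * (C + a) ^+ 2 <= (i + 1) * (K + k) * (P + p).
Proof.
move=> i2 ic C0 a0 k0 p0 cK iP side IH.
set x := 2 * c + 1; set y := 2 * i ^+ 2 - 1.
have x0 : 0 < x by rewrite /x; lra.
have y0 : 1 < y by rewrite /y; nra.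
have c0 : 0 < c by lra.
have KE : K = i * C / c by rewrite -cK mulrC mulKf //; lra.
have PE : P = (c + 1) * C / (i + 1) by rewrite -iP mulrC mulKf //; lra.
have K0 : 0 <= K by rewrite KE; apply: divr_ge0; nra.
have P0 : 0 <= P by rewrite PE; apply: divr_ge0; nra.
set u0 := C * (x + 1) / x; set v0 := a * (y - 1) / y.
have u00 : 0 <= u0 by rewrite /u0; apply: divr_ge0; nra.
have v00 : 0 <= v0 by rewrite /v0; apply: divr_ge0; nra.
have HU : i * u0 ^+ 2 <= (i + 1) * K * P.
  rewrite KE PE /u0 /x.
  have -> : (i + 1) * (i * C / c) * ((c + 1) * C / (i + 1)) = i * C ^+ 2 * (c + 1) / c.
    by field; lra.
  rewrite ler_pdivlMr // expr_div_n.
  have -> : i * ((C * (2 * c + 1 + 1)) ^+ 2 / (2 * c + 1) ^+ 2) * c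
     = (i * C ^+ 2 * (c + 1)) * (4 * c * (c + 1) / (2 * c + 1) ^+ 2) by field; lra.
  rewrite -[X in _ <= X]mulr1; apply: ler_wpM2l.
    by apply: mulr_ge0; [apply: mulr_ge0; [lra| apply: sqr_ge0] | lra].
  rewrite ler_pdivrMr; last by apply: exprn_gt0; lra.
  rewrite mul1r; nra.
have HV : i * v0 ^+ 2 <= (i + 1) * k * p.
  have h1 : (i + 1) * (i - 1) * a ^+ 2 <= (i + 1) * (i * k * p) by rewrite -mulrA; apply: ler_wpM2l; lra.
  have h2 : i * v0 ^+ 2 * i <= (i + 1) * (i - 1) * a ^+ 2.
    rewrite /v0 /y expr_div_n.
    have -> : i * ((a * (2 * i ^+ 2 - 1 - 1)) ^+ 2 / (2 * i ^+ 2 - 1) ^+ 2) * i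
      = ((i + 1) * (i - 1) * a ^+ 2) * (4 * i ^+ 2 * (i ^+ 2 - 1) / (2 * i ^+ 2 - 1) ^+ 2).
      by field; nra.
    rewrite -[X in _ <= X]mulr1; apply: ler_wpM2l.
      by apply: mulr_ge0; [apply: mulr_ge0; lra | apply: sqr_ge0].
    rewrite ler_pdivrMr; last by apply: exprn_gt0; nra.
    rewrite mul1r; set z := i ^+ 2; nra.
  have : i * v0 ^+ 2 * i <= (i + 1) * k * p * i by nra.
  rewrite ler_pM2r //; lra.
have HW : 2 * i * u0 * v0 <= (i + 1) * (K * p + P * k).
  have sq : (2 * i * u0 * v0) ^+ 2 <= ((i + 1) * (K * p + P * k)) ^+ 2.
    have e1 : ((i + 1) * (K * p + P * k)) ^+ 2 >= 4 * ((i + 1) * K * P) * ((i + 1) * k * p).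
      have : 0 <= (K * p - P * k) ^+ 2 by apply: sqr_ge0.
      nra.
    have e2 : (i * u0 ^+ 2) * (i * v0 ^+ 2) <= ((i + 1) * K * P) * ((i + 1) * k * p).
      apply: ler_pM => //; apply: mulr_ge0; (try lra); apply: sqr_ge0.
    have -> : (2 * i * u0 * v0) ^+ 2 = 4 * ((i * u0 ^+ 2) * (i * v0 ^+ 2)) by ring.
    lra.
  set W := (i + 1) * (K * p + P * k) in sq *.
  set L := 2 * i * u0 * v0 in sq *.
  have W0 : 0 <= W by rewrite /W; apply: mulr_ge0; [lra | apply: addr_ge0; apply: mulr_ge0].
  case: (lerP L W) => // h.
  have : W ^+ 2 < L ^+ 2 by rewrite ltr_pXn2r // ?nnegrE; lra.
  lra.
have Huv : C + a <= u0 + v0.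
  rewrite /u0 /v0.
  have -> : C * (x + 1) / x = C + C / x by field; lra.
  have -> : a * (y - 1) / y = a - a / y by field; lra.
  suff : a / y <= C / x by lra.
  rewrite ler_pdivrMr; last lra.
  rewrite mulrAC ler_pdivlMr; last lra.
  rewrite /x /y; lra.
have : i * (C + a) ^+ 2 <= i * (u0 + v0) ^+ 2.
  apply: ler_wpM2l; first lra.
  rewrite ler_pXn2r // ?nnegrE; lra.
nra.
Qed.

Lemma step_nat (j c C K P a k p : nat) : (j.+2 <= c)%N -> (c * K = j.+2 * C)%N ->
  (j.+3 * P = c.+1 * C)%N -> (a * (2 * c + 1) + C <= 2 * (j.+2 * j.+2) * C)%N ->
  (j.+1 * (a * a) <= j.+2 * k * p)%N ->
  (j.+2 * ((C + a) * (C + a)) <= j.+3 * (K + k) * (P + p))%N.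
Proof.
move=> ic cK iP side IH.
rewrite -(ler_nat rat) !natrM !natrD.
have cK' : (c%:R : rat) * K%:R = (j.+2)%:R * C%:R by rewrite -!natrM cK.
have iP' : ((j.+2)%:R + 1 : rat) * P%:R = (c%:R + 1) * C%:R.
  by rewrite !natr1 -!natrM iP.
have side' : (a%:R : rat) * (2 * c%:R + 1) <= C%:R * (2 * (j.+2)%:R ^+ 2 - 1).
  move: side; rewrite -(ler_nat rat) !natrM !natrD => side.
  rewrite expr2; lra.
have IH' : ((j.+2)%:R - 1 : rat) * a%:R ^+ 2 <= (j.+2)%:R * k%:R * p%:R.
  move: IH; rewrite -(ler_nat rat) !natrM => IH.
  rewrite (_ : (j.+2)%:R - 1 = (j.+1)%:R :> rat); last by rewrite -[in LHS]natr1 addrK.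
  by rewrite expr2.
have h := @step_real rat (j.+2)%:R c%:R C%:R K%:R P%:R a%:R k%:R p%:R.
rewrite !natr1 !expr2 in h; apply: h => //.
- by rewrite (_ : 2 = (2%N)%:R :> rat) // ler_nat.
- by rewrite ler_nat.
- by rewrite -!natrM iP.
Qed.

End RealPart.

Lemma side_lem (j c C D a : nat) : j.+2 <= c -> (c = j.+2 -> C = 1) ->
  j.+2 * C = (c - j.+1) * D -> a < D -> a * (2 * c + 1) + C <= 2 * (j.+2 * j.+2) * C.
Proof.
move=> ic c1 E aD.
case: (ltngtP c j.+2) => hc; first lia.
- have e2 : 2 <= c - j.+1 by lia.
  set e := c - j.+1 in E e2.
  have ce : c = e + j.+1 by rewrite /e; lia.
  have H1 : e * a < j.+2 * C by rewrite E; rewrite ltn_pmul2l //; lia.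
  have H2 : e * (a * (2 * c + 1) + C) <= e * (2 * (j.+2 * j.+2) * C).
    have P1 : j.+2 * (2 * c + 1) + e <= 2 * (j.+2 * j.+2) * e by rewrite ce; nia.
    have P2 : e * a * (2 * c + 1) <= j.+2 * C * (2 * c + 1) by apply: leq_mul; lia.
    have P3 : C * (j.+2 * (2 * c + 1) + e) <= C * (2 * (j.+2 * j.+2) * e) by apply: leq_mul.
    have E1 : e * (a * (2 * c + 1) + C) = e * a * (2 * c + 1) + e * C by ring.
    have E2 : C * (j.+2 * (2 * c + 1) + e) = j.+2 * C * (2 * c + 1) + e * C by ring.
    have E3 : C * (2 * (j.+2 * j.+2) * e) = e * (2 * (j.+2 * j.+2) * C) by ring.
    lia.
  by rewrite leq_pmul2l in H2; lia.
- rewrite c1 // muln1 in E *.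
  have : a < j.+2 by move: E aD; rewrite hc; lia.
  rewrite hc; nia.
Qed.

Lemma L2 i a : 0 < i -> i * (a * a) <= i.+1 * kappa i a * pp i a.
Proof.
case: i => // j _; elim: j a => [|j IH] a.
  case: (posnP a) => [->|a0] //.
  have t1 : macaulay_top 1 a = a by apply: top_spec => //; rewrite !bin1; lia.
  rewrite kappaS // ppS // t1 bin0 /=.
  have := mul_bin_diag a.+1 1; rewrite /= bin1; nia.
case: (posnP a) => [->|a0]; first by rewrite !muln0.
rewrite kappaS // ppS //.
set c := macaulay_top j.+2 a.
have [ic Hc1 Hc2] := topP (ltn0Sn j.+1) a0.
have ra := rem_lt j.+1 a0.
rewrite -/c in ic Hc1 Hc2 ra.
have IH' := IH (a - 'C(c, j.+2)).
have -> : a = 'C(c, j.+2) + (a - 'C(c, j.+2)) by rewrite subnKC.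
rewrite addKn.
apply: (@step_nat j c) => //.
- by rewrite mul_bin_diag.
- by rewrite mul_bin_diag.
- apply: (@side_lem j c _ 'C(c, j.+1)) => //.
  + by move=> ->; rewrite binn.
  + by rewrite mul_bin_left.
Qed.

Lemma chain (A : nat -> nat) n : A 0 = 1 -> (forall k, k <= n -> 0 < A k) ->
  (forall k, k.+2 <= n -> k.+2 * A k.+2 * A k <= k.+1 * (A k.+1 * A k.+1)) ->
  forall i, i < n -> kappa i.+1 (A i.+1) <= A i.
Proof.
move=> A0 Apos ulc; elim=> [|j IH] jn.
  rewrite A0; case: (A 1) => //= m; by rewrite bin0.
have IH' := IH (ltnW jn).
have h1 := L2 (A j.+1) (ltn0Sn j).
have h2 := ulc j jn.
have h3 : j.+2 * kappa j.+1 (A j.+1) * pp j.+1 (A j.+1) <= j.+2 * A j * pp j.+1 (A j.+1).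
  by apply: leq_mul => //; apply: leq_mul.
have h4 : j.+2 * A j * A j.+2 <= j.+2 * A j * pp j.+1 (A j.+1).
  have -> : j.+2 * A j * A j.+2 = j.+2 * A j.+2 * A j by ring.
  lia.
have p0 : 0 < j.+2 * A j by rewrite muln_gt0 Apos //; lia.
rewrite leq_pmul2l // in h4.
exact: Mlem.
Qed.

Section ULC.
Local Open Scope ring_scope.
Variable R : numDomainType.

Definition ULCp (q : {poly R}) : Prop :=
  [/\ forall j, 0 <= q`_j, forall j, 0 < q`_j.+1 -> 0 < q`_j &
      forall k, k.+2%:R * q`_k.+2 * q`_k <= k.+1%:R * q`_k.+1 ^+ 2].

Lemma ULCp_C c : 0 < c -> ULCp c%:P.
Proof.
move=> c0; split => [j|j|k]; rewrite !coefC //.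
- by case: ifP => // _; apply: ltW.
- by rewrite /= ltxx.
- by rewrite /= mulr0 mul0r expr0n /= mulr0.
Qed.

Lemma coefXr (q : {poly R}) r j :
  (q * ('X + r%:P))`_j = (if j == 0%N then 0 else q`_j.-1) + q`_j * r.
Proof. by rewrite mulrDr coefD coefMX coefMC. Qed.

Ltac nng := repeat first [ assumption
  | match goal with H : forall j : nat, is_true (0 <= _) |- _ => apply: H end
  | apply: ltW; assumption | apply: mulr_ge0 | apply: addr_ge0 | apply: exprn_ge0
  | apply: ler0n | apply: ler01 ].

Lemma ULCp_step q r : 0 < r -> ULCp q -> ULCp (q * ('X + r%:P)).
Proof.
move=> r0 [nn pos ulc].
have nnB j : 0 <= (q * ('X + r%:P))`_j.
  rewrite coefXr; apply: addr_ge0; first by case: ifP.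
  by apply: mulr_ge0 => //; apply: ltW.
split => // [j|k].
- rewrite !coefXr /= => h.
  have qj : 0 < q`_j.
    have := nn j; rewrite le0r => /orP [/eqP qj0|//].
    have := nn j.+1; rewrite le0r => /orP [/eqP q10|//].
      by move: h; rewrite qj0 q10 mul0r addr0 ltxx.
    by move=> /pos; rewrite qj0 ltxx.
  apply: ltr_wpDl; first by case: ifP.
  by apply: mulr_gt0.
- rewrite !coefXr /=.
  case: k => [|k].
    rewrite eqxx add0r.
    set q0 := q`_0; set q1 := q`_1; set q2 := q`_2.
    have h := ulc 0%N; rewrite -/q0 -/q1 -/q2 in h.
    rewrite -subr_ge0.
    have -> : 1%:R * (q0 + q1 * r) ^+ 2 - 2%:R * (q1 + q2 * r) * (q0 * r)
      = q0 ^+ 2 + r ^+ 2 * (1%:R * q1 ^+ 2 - 2%:R * q2 * q0) by ring.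
    apply: addr_ge0; first by apply: exprn_ge0; apply: nn.
    by apply: mulr_ge0; [apply: exprn_ge0; apply: ltW | rewrite subr_ge0].
  rewrite /=.
  set q0 := q`_k; set q1 := q`_k.+1; set q2 := q`_k.+2; set q3 := q`_k.+3.
  set a := (k.+1)%:R : R.
  have ha : k.+2%:R = a + 1 :> R by rewrite /a -natr1.
  have hb : k.+3%:R = a + 2 :> R by rewrite /a -!natr1; ring.
  have a0 : 0 < a by rewrite /a ltr0n.
  have D0 := ulc k; rewrite -/q0 -/q1 -/q2 -/a ha -subr_ge0 in D0.
  have D1 := ulc k.+1; rewrite -/q1 -/q2 -/q3 ha hb -subr_ge0 in D1.
  rewrite ha hb -subr_ge0.
  set d0 := _ - _ in D0; set d1 := _ - _ in D1.
  have T2 : 0 <= d1 by [].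
  have T0 : 0 <= (a + 1) * q1 ^+ 2 - (a + 2) * q2 * q0.
    have e : (a + 1) * ((a + 1) * q1 ^+ 2 - (a + 2) * q2 * q0) = (a + 2) * d0 + q1 ^+ 2.
      by rewrite /d0; ring.
    rewrite -(pmulr_rge0 _ (x := a + 1)); last by apply: addr_gt0.
    by rewrite e; apply: addr_ge0; [apply: mulr_ge0 => //; apply: addr_ge0; apply: ltW | apply: exprn_ge0; apply: nn].
  have T1 : 0 <= a * q1 * q2 - (a + 2) * q3 * q0.
    have q3nn := nn k.+3; rewrite le0r in q3nn; case/orP: q3nn => [/eqP q30|q3p].
      rewrite -/q3 in q30; rewrite q30 mulr0 mul0r subr0.
      by apply: mulr_ge0; [apply: mulr_ge0; [apply: ltW|apply: nn] |apply: nn].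
    have q2p : 0 < q2 by apply: pos.
    have q1p : 0 < q1 by apply: pos.
    have e : (a + 1) * q1 * q2 * (a * q1 * q2 - (a + 2) * q3 * q0)
      = d1 * d0 + (a + 1) * d1 * q2 * q0 + (a + 2) * d0 * q3 * q1.
      by rewrite /d0 /d1; ring.
    rewrite -(pmulr_rge0 _ (x := (a + 1) * q1 * q2)); last first.
      by apply: mulr_gt0 => //; apply: mulr_gt0 => //; apply: addr_gt0.
    by rewrite e; nng.
  have -> : (a + 1) * (q1 + q2 * r) ^+ 2 - (a + 2) * (q2 + q3 * r) * (q0 + q1 * r)
    = ((a + 1) * q1 ^+ 2 - (a + 2) * q2 * q0) + r * (a * q1 * q2 - (a + 2) * q3 * q0)
      + r ^+ 2 * d1 by rewrite /d1; ring.
  nng.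
Qed.

End ULC.

Section Main.
Local Open Scope ring_scope.

Lemma ULCp_prod (R : numDomainType) (c : R) rs : 0 < c -> (forall z, z \in rs -> z < 0) ->
  ULCp (c *: \prod_(z <- rs) ('X - z%:P)).
Proof.
move=> c0; elim: rs => [|z rs IH] Hz.
  by rewrite big_nil alg_polyC; apply: ULCp_C.
rewrite big_cons scalerAr mulrC -polyCN.
apply: ULCp_step; first by rewrite oppr_gt0; apply: Hz; rewrite mem_head.
by apply: IH => w wr; apply: Hz; rewrite inE wr orbT.
Qed.

Lemma Apos (fs : seq nat) k : all (fun x => 0 < x)%N fs -> (0 < nth 1 (1 :: fs) k)%N.
Proof.
move=> /all_nthP H; case: k => [|k] //=.
case: (ltnP k (size fs)) => h; first by apply: H.
by rewrite nth_default.
Qed.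

Lemma ulc_fs (fs : seq nat) : all (fun x => 0 < x)%N fs ->
  (forall z : algC, root (fpoly fs) z -> z \is Num.real) ->
  forall k, (k.+2 <= size fs)%N ->
  (k.+2 * nth 1 (1 :: fs) k.+2 * nth 1 (1 :: fs) k <=
   k.+1 * (nth 1 (1 :: fs) k.+1 * nth 1 (1 :: fs) k.+1))%N.
Proof.
move=> allp realr k kn.
set A := fun k => nth 1 (1 :: fs) k.
set n := size fs.
set p := fpoly fs.
have pc j : p`_j = if (j < n.+1)%N then (A j)%:R else 0.
  by rewrite /p /fpoly coef_poly.
have Ap j : (0 < A j)%N by apply: Apos.
have sp : size p = n.+1.
  rewrite /p /fpoly size_poly_eq //= pnatr_eq0 -lt0n; exact: (Ap n).
have lc : 0 < lead_coef p by rewrite lead_coefE sp pc /= ltnSn ltr0n.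
have [rs Hrs] := closed_field_poly_normal p.
have neg : forall z, z \in rs -> z < 0.
  move=> z zr.
  have rz : root p z by rewrite Hrs rootZ ?root_prod_XsubC // gt_eqF.
  have zreal := realr z rz.
  rewrite real_ltNge //; apply/negP => z0.
  move: rz; rewrite /root horner_coef sp big_ord_recl /= pc /= expr0 mulr1.
  have -> : (A 0)%:R = 1 :> algC by [].
  move=> /eqP h.
  have : 0 < 1 + \sum_(i < n) p`_(lift ord0 i) * z ^+ lift ord0 i.
    apply: ltr_wpDr; last by apply: ltr01.
    apply: sumr_ge0 => i _; apply: mulr_ge0; last by apply: exprn_ge0.
    by rewrite pc; case: ifP => // _; apply: ler0n.
  by rewrite h ltxx.
have U : ULCp p by rewrite Hrs; apply: ULCp_prod.
case: U => _ _ /(_ k).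
rewrite !pc.
have -> : (k.+2 < n.+1)%N by [].
have -> : (k.+1 < n.+1)%N by rewrite ltnS; apply: ltnW.
have -> : (k < n.+1)%N by rewrite ltnS; apply: ltnW; apply: ltnW.
by rewrite -natrX -!natrM ler_nat -mulnn.
Qed.

End Main.

Theorem corollary3p2 (fs : seq nat) :
  all (fun x => 0 < x)%N fs ->
  (forall z : algC, root (fpoly fs) z -> z \is Num.real) ->
  forall i : nat, (i < size fs)%N ->
    (kappa i.+1 (nth 0 fs i) <= nth 1 (1 :: fs) i)%N.
Proof.
move=> allp realr i isz.
have := @chain (fun k => nth 1 (1 :: fs) k) (size fs) erefl
  (fun k _ => Apos k allp) (ulc_fs allp realr) i isz.
by rewrite /= (set_nth_default 1 0 isz).
Qed.
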